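(* Let $y\in V(D^+)$ and let $v_j,v_i$ be two descendants of $y$ in $D^+$ with $d_s(v_j)\le d_s(v_i)$. If $g^*(v_j)\neq\infty$, then $\min_{u\prec y} g(v_i,u)\ge g^*(v_j)$.
   Context: $G=(V,E,w)$ is a simple, connected, undirected graph with positive edge lengths, $s,t\in V$, $d(\cdot,\cdot)$ the shortest path distance in $G$, $d_s(v)=d(s,v)$. $D$ is the union of all shortest $st$-paths of $G$, and $D^+$ is the directed acyclic graph obtained from $D$ by orienting every edge toward $t$. $x\prec y$ means $x$ is an ancestor of $y$ in $D^+$ (a directed path of positive length from $x$ to $y$ exists); a descendant of $y$ is a vertex $v$ with $y\prec v$. For $x\neq s$, $v\neq x$ is an $s$-dominator of $x$ if every directed path from $s$ to $x$ in $D^+$ contains $v$, and $I_s(x)$ is the $s$-dominator of $x$ closest to $x$ (every other $s$-dominator of $x$ is an $s$-dominator of $I_s(x)$). Symmetrically, for $x\neq t$, $v\neq x$ is a $t$-dominator of $x$ if every directed path from $x$ to $t$ in $D^+$ contains $v$, and $I_t(x)$ is the $t$-dominator closest to $x$. For $x\neq s$, $C(x)=\{v: I_s(x)\prec v\prec x\}$. For $x\neq s$ and $y\in V(D^+)$, $g(x,y)=d(y,x)$ if $y\in C(x)$ and $x\prec I_t(y)$, and $g(x,y)=\infty$ otherwise; $g^*(x)=\min_y g(x,y)$. A minimum over the empty set is $\infty$. *)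

(* Defs.v *)
From HB Require Import structures.
From mathcomp Require Import all_boot all_order all_algebra.
From mathcomp Require Import boolp classical_sets reals constructive_ereal.
Set Implicit Arguments. Unset Strict Implicit. Unset Printing Implicit Defensive.
Import Order.TTheory GRing.Theory Num.Theory.
Local Open Scope ring_scope.

Section SPDAG.
Variables (R : realType) (T : finType) (adj : rel T) (w : T -> T -> R)
          (d : T -> T -> R) (s t : T).

Fixpoint wlen (x : T) (p : seq T) : R :=
  match p with [::] => 0 | y :: p' => w x y + wlen y p' end.

Definition is_sp_dist : Prop :=
  forall x y,
    (forall p, path adj x p -> last x p = y -> d x y <= wlen x p) /\
    (exists p, [/\ path adj x p, last x p = y & wlen x p = d x y]).

Definition shortest_st (p : seq T) : Prop :=
  [/\ path adj s p, last s p = t & wlen s p = d s t].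

(* vertices of D (= V(D^+)) : vertices lying on some shortest st-path *)
Definition inD (v : T) : Prop := exists p, shortest_st p /\ v \in s :: p.

(* arcs of D^+ : consecutive vertices u, v (in the direction s -> t) of
   some shortest st-path *)
Definition arc (u v : T) : Prop :=
  exists p q1 q2, shortest_st p /\ s :: p = q1 ++ u :: v :: q2.

Fixpoint dwalk (x : T) (p : seq T) : Prop :=
  match p with [::] => True | y :: p' => arc x y /\ dwalk y p' end.

(* x ≺ y : a directed path of positive length from x to y in D^+ *)
Definition anc (x y : T) : Prop :=
  exists p, [/\ p <> [::], dwalk x p & last x p = y].

Definition sdom (x v : T) : Prop :=
  [/\ x <> s, v <> x &
      forall p, dwalk s p -> last s p = x -> v \in s :: p].

Definition tdom (x v : T) : Prop :=
  [/\ x <> t, v <> x &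
      forall p, dwalk x p -> last x p = t -> v \in x :: p].

Definition isIs (x z : T) : Prop :=
  sdom x z /\ forall v, sdom x v -> v <> z -> sdom z v.

Definition isIt (x z : T) : Prop :=
  tdom x z /\ forall v, tdom x v -> v <> z -> tdom z v.

Definition inC (x v : T) : Prop :=
  exists z, [/\ isIs x z, anc z v & anc v x].

Local Open Scope ereal_scope.

Definition g (x y : T) : \bar R :=
  if `[< x <> s /\ inC x y /\ exists z, isIt y z /\ anc x z >]
  then (d y x)%:E else +oo.

Definition gstar (x : T) : \bar R :=
  \big[Order.min/+oo]_(y | `[< inD y >]) g x y.

End SPDAG.

(* Main.v *)
Require Import Defs.
From HB Require Import structures.
From mathcomp Require Import all_boot all_order all_algebra.
From mathcomp Require Import boolp classical_sets reals constructive_ereal.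
From mathcomp Require Import lra.
Import Order.TTheory GRing.Theory Num.Theory.
Local Open Scope ring_scope.
Set Implicit Arguments. Unset Strict Implicit.

Lemma mem_split (T : eqType) (x : T) (l : seq T) :
  x \in l -> exists q1 q2, l = q1 ++ x :: q2.
Proof.
elim: l => // a l IH; rewrite in_cons => /orP [/eqP ->|/IH [q1 [q2 ->]]].
  by exists [::], l.
by exists (a :: q1), q2.
Qed.
Arguments mem_split {T x l}.

Section Aux.
Variables (R : realType) (T : finType) (adj : rel T) (w : T -> T -> R)
          (d : T -> T -> R) (s t : T).
Hypothesis w_pos : forall x y, adj x y -> 0 < w x y.
Hypothesis d_sp : is_sp_dist adj w d.

Local Notation wlen := (Defs.wlen w).
Local Notation arc := (Defs.arc adj w d s t).
Local Notation dwalk := (Defs.dwalk adj w d s t).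
Local Notation anc := (Defs.anc adj w d s t).
Local Notation inD := (Defs.inD adj w d s t).

Lemma wlen_cat x p q : wlen x (p ++ q) = wlen x p + wlen (last x p) q.
Proof. by elim: p x => [|a p IH] x /=; rewrite ?add0r // IH addrA. Qed.

Lemma wlen_ge0 x p : path adj x p -> 0 <= wlen x p.
Proof.
elim: p x => [|a p IH] x //= /andP [h1 h2].
by rewrite addr_ge0 ?IH // ltW // w_pos.
Qed.

Lemma wlen_gt0 x p : p <> [::] -> path adj x p -> 0 < wlen x p.
Proof.
case: p => [//|a p] _ /= /andP [h1 h2].
by rewrite ltr_wpDr ?wlen_ge0 ?w_pos.
Qed.

Lemma walk_le x p : path adj x p -> d x (last x p) <= wlen x p.
Proof. by move=> hp; have [H _] := d_sp x (last x p); apply: H. Qed.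

Lemma dext x q : path adj x q -> d s (last x q) <= d s x + wlen x q.
Proof.
move=> hq; have [_ [P [hP hl hw]]] := d_sp s x.
have := @walk_le s (P ++ q); rewrite cat_path last_cat hl hP hq wlen_cat hl hw.
by apply.
Qed.

Lemma tri x y : d s y <= d s x + d x y.
Proof.
have [_ [P [hP hl hw]]] := d_sp x y.
by have := @dext x P hP; rewrite hl hw.
Qed.

Lemma split_s p q1 a q2 : s :: p = q1 ++ a :: q2 ->
  exists P0, p = P0 ++ q2 /\ last s P0 = a.
Proof.
case: q1 => [|x q1] /= [-> ->]; first by exists [::].
by exists (rcons q1 a); rewrite cat_rcons last_rcons.
Qed.

Lemma sp_dwalk p : shortest_st adj w d s t p ->
  forall q2 q1 v, s :: p = q1 ++ v :: q2 -> dwalk v q2.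
Proof.
move=> hp; elim=> [|b q2 IH] q1 v E //=; split.
  by exists p, q1, q2.
by apply: (IH (rcons q1 v)); rewrite E cat_rcons.
Qed.

Lemma dwalk_cat x p q : dwalk x (p ++ q) <-> dwalk x p /\ dwalk (last x p) q.
Proof.
elim: p x => [|a p IH] x /=; first by split=> // [[]].
rewrite IH; tauto.
Qed.

Lemma inD_walks (v : T) : inD v ->
  (exists P0, dwalk s P0 /\ last s P0 = v) /\ (exists Q, dwalk v Q /\ last v Q = t).
Proof.
move=> [p [hp hv]]; have [q1 [q2 E]] := mem_split hv.
have [P0 [Ep hl]] := split_s E.
have hw : dwalk s p by exact: (@sp_dwalk p hp p [::] s erefl).
have [_ hl2 _] := hp.
split.
  by exists P0; split=> //; move: hw; rewrite Ep dwalk_cat => -[].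
exists q2; split; first exact: (@sp_dwalk p hp q2 q1 v E).
by move: hl2; rewrite Ep last_cat hl.
Qed.

Lemma arc_props (a b : T) : arc a b ->
  [/\ is_true (adj a b), d s b = d s a + w a b, inD a & inD b].
Proof.
move=> [p [q1 [q2 [hp E]]]].
have hinD : forall v, v \in q1 ++ a :: b :: q2 -> inD v.
  by move=> v hv; exists p; split=> //; rewrite E.
have [P0 [Ep hl]] := split_s E.
have [hpath hlast hw] := hp.
move: (hpath); rewrite Ep cat_path hl /= => /and3P [hP0 hab hq2].
have l1 := @walk_le s P0 hP0; rewrite hl in l1.
have l2 := @walk_le s (P0 ++ [:: b]); rewrite cat_path hP0 hl /= hab last_cat in l2.
have {}l2 := l2 isT; rewrite wlen_cat hl /= addr0 in l2.
have hlt : last b q2 = t by move: hlast; rewrite Ep last_cat hl.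
have l3 := @dext a (b :: q2); rewrite /= hab hq2 hlt in l3.
have {}l3 := l3 isT.
have l4 := @dext b q2 hq2; rewrite hlt in l4.
move: hw; rewrite Ep wlen_cat hl /= => hw.
split.
- exact: hab.
- lra.
- by apply: hinD; rewrite mem_cat mem_head orbT.
- by apply: hinD; rewrite mem_cat !in_cons eqxx !orbT.
Qed.

Lemma dwalk_props (x : T) (p : seq T) : dwalk x p ->
  path adj x p /\ d s (last x p) = d s x + wlen x p.
Proof.
elim: p x => [|b p IH] x /=; first by rewrite addr0.
move=> [/arc_props [hab hd _ _] /IH [hp hl]]; rewrite hab hp hl hd; split=> //.
by rewrite addrA.
Qed.

Lemma anc_lt (a b : T) : anc a b -> d s a < d s b.
Proof.
move=> [p [hne hw <-]]; have [hp ->] := dwalk_props hw.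
by rewrite ltrDl wlen_gt0.
Qed.

Lemma anc_d (a b : T) : anc a b -> d a b = d s b - d s a.
Proof.
move=> [p [hne hw hl]]; have [hp hd] := dwalk_props hw.
rewrite hl in hd; have := @walk_le a p hp; rewrite hl => h1.
have h2 := tri a b; lra.
Qed.

Lemma anc_trans (a b c : T) : anc a b -> anc b c -> anc a c.
Proof.
move=> [p [hp hw hl]] [q [hq hw2 hl2]]; exists (p ++ q); split.
- by case: p hp {hw hl}.
- by apply/dwalk_cat; rewrite hl.
- by rewrite last_cat hl.
Qed.

Lemma mem_anc (x : T) (p : seq T) (z : T) : dwalk x p -> z \in p -> anc x z.
Proof.
elim: p x => [|b p IH] x //= [hab hw]; rewrite in_cons => /orP [/eqP ->|hz].
  by exists [:: b].
apply: anc_trans (IH _ hw hz); by exists [:: b].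
Qed.

Lemma mem_anc_last (x : T) (p : seq T) (z : T) : dwalk x p -> z \in x :: p ->
  z = last x p \/ anc z (last x p).
Proof.
elim: p x => [|b p IH] x /=.
  by move=> _; rewrite in_cons in_nil orbF => /eqP ->; left.
move=> [hab hw]; rewrite in_cons => /orP [/eqP ->|hz].
  by right; exists (b :: p).
exact: IH.
Qed.

Lemma anc_inD (a b : T) : anc a b -> inD a /\ inD b.
Proof.
move=> [p [hne hw <-]]; elim: p a hne hw => [//|c p IH] a _ /= [hac hw].
have [_ _ ha hc] := arc_props hac; split=> //.
case: p IH hw => [|e p] IH hw //=.
by have [] := IH c (fun h => (ltac:(discriminate))) hw.
Qed.

End Aux.

Unset Implicit Arguments.

Theorem lemma9 (R : realType) (T : finType) (adj : rel T) (w : T -> T -> R)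
    (d : T -> T -> R) (s t : T)
    (adj_sym : symmetric adj) (adj_irr : irreflexive adj)
    (w_pos : forall x y, adj x y -> 0 < w x y)
    (w_sym : forall x y, adj x y -> w x y = w y x)
    (d_sp : is_sp_dist adj w d)
    (y vi vj : T)
    (hy : inD adj w d s t y)
    (hvi : anc adj w d s t y vi) (hvj : anc adj w d s t y vj)
    (hd : d s vj <= d s vi)
    (hfin : gstar adj w d s t vj != +oo%E) :
  (gstar adj w d s t vj <=
     \big[Order.min/+oo%E]_(u | `[< anc adj w d s t u y >]) g adj w d s t vi u)%E.
Proof.
have [y' [hy' hgy']] : exists y', inD adj w d s t y' /\ g adj w d s t vj y' <> +oo%E.
  case: (pselect (exists y', inD adj w d s t y' /\ g adj w d s t vj y' <> +oo%E)) => // hn.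
  exfalso; move/eqP: hfin; apply; rewrite /gstar big1 // => y'' /asboolP hy''.
  case: (g adj w d s t vj y'' =P +oo%E) => // hne; exfalso; apply: hn; by exists y''.
have gs_le : forall u, inD adj w d s t u -> (gstar adj w d s t vj <= g adj w d s t vj u)%E.
  move=> u hu; rewrite /gstar (bigD1 u) /=; last by apply/asboolP.
  by rewrite ge_min lexx.
have hgy := gs_le y' hy'.
move: hgy' hgy; rewrite /g; case: asboolP => // -[hvjs [[z [hIs hzy' hy'vj]] _]] _ hgy.
apply: (big_ind (fun v => gstar adj w d s t vj <= v)%E).
- exact: leey.
- by move=> a b ha hb; rewrite le_min ha hb.
move=> u /asboolP hu.
rewrite /g; case: asboolP => [[hvis [[zi [hIsi hziu huvi]] [z'' [hIt hviz]]]]|_]; last exact: leey.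
have caseB : d s u <= d s z -> (gstar adj w d s t vj <= (d u vi)%:E)%E.
  move=> h; apply: le_trans hgy _; rewrite lee_fin.
  have := anc_lt w_pos d_sp hzy'; have := anc_d d_sp hy'vj; have := anc_d d_sp huvi; lra.
have [hinDu _] := anc_inD d_sp hu.
have [[P0 [hw0 hl0]] _] := inD_walks hinDu.
have [hinDvj1 hinDvj] := anc_inD d_sp hvj.
have [_ [Q [hwQ hlQ]]] := inD_walks hinDvj.
have [Puy [hne1 hw1 hl1]] := hu.
have [Pyv [hne2 hw2 hl2]] := hvj.
have hwuv : dwalk adj w d s t u (Puy ++ Pyv) by apply/dwalk_cat; rewrite hl1.
have hluv : last u (Puy ++ Pyv) = vj by rewrite last_cat hl1.
have [[_ _ hsd] _] := hIs.
have hz : z \in s :: (P0 ++ (Puy ++ Pyv)).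
  apply: hsd; first by apply/dwalk_cat; rewrite hl0.
  by rewrite last_cat hl0.
move: hz; rewrite -cat_cons mem_cat => /orP [hz0|hz1]; last first.
  by apply: caseB; apply/ltW/(anc_lt w_pos d_sp); apply: mem_anc hwuv hz1.
have := mem_anc_last hw0 hz0; rewrite hl0 => -[hzu|hzu].
  by apply: caseB; rewrite hzu.
have huvj : anc adj w d s t u vj := anc_trans hu hvj.
have hviz'' : anc adj w d s t vj z''.
  have [[_ _ htd] _] := hIt.
  have : z'' \in u :: ((Puy ++ Pyv) ++ Q).
    apply: htd; first by apply/dwalk_cat; rewrite hluv.
    by rewrite last_cat hluv.
  rewrite -cat_cons mem_cat => /orP [h1|h2]; last by apply: mem_anc hwQ h2.
  have hlt := anc_lt w_pos d_sp hviz.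
  have := mem_anc_last hwuv h1; rewrite hluv => -[e|a].
    by rewrite e in hlt; exfalso; lra.
  by have := anc_lt w_pos d_sp a; lra.
apply: le_trans (gs_le u hinDu) _.
rewrite /g asboolT; last first.
  split=> //; split; first by exists z.
  by exists z''.
rewrite lee_fin; have := anc_d d_sp huvj; have := anc_d d_sp huvi; lra.
Qed.
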